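(* Let $G$ be a finite group with $Z(G)=I$, $(C_1,\dots,C_m)$ a class vector of $G$ with $m\ge 6$, and $3\le n\le m-3$. Then $$l^i(C_1,\dots,C_m)\ \ge\ |G|\cdot l^i(C_1,\dots,C_n)\cdot l^i(C_{n+1},\dots,C_m).$$
   Context: $I$ is the trivial group and $\iota$ the identity. A class vector is a tuple of non-trivial conjugacy classes. $\Sigma^i(C_1,\dots,C_k)$ is the set of $G$-conjugacy classes (simultaneous conjugation) of tuples $(\sigma_1,\dots,\sigma_k)$ with $\sigma_j\in C_j$, $\langle\sigma_1,\dots,\sigma_k\rangle=G$, $\sigma_1\cdots\sigma_k=\iota$, and $l^i(C_1,\dots,C_k)=|\Sigma^i(C_1,\dots,C_k)|$. *)

(* Defs.v *)
From mathcomp Require Import all_boot all_fingroup all_solvable.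
Set Implicit Arguments. Unset Strict Implicit. Unset Printing Implicit Defensive.
Local Open Scope group_scope.

(* A class vector (C_1,...,C_k) is represented as a sequence s of sets of gT;
   tuples (sigma_1,...,sigma_k) are finite functions 'I_(size s) -> gT. *)

Definition class_vector (gT : finGroupType) (G : {group gT}) (s : seq {set gT}) : Prop :=
  forall C, C \in s -> C \in classes G /\ C != 1.

Definition gen_tuples (gT : finGroupType) (G : {group gT}) (s : seq {set gT})
  : {set {ffun 'I_(size s) -> gT}} :=
  [set t : {ffun 'I_(size s) -> gT} |
     [&& [forall i, t i \in nth set0 s i],
         << [set t i | i : 'I_(size s)] >> == G
       & \prod_(i < size s) t i == 1]].

Definition conj_tuple (gT : finGroupType) k (t : {ffun 'I_k -> gT}) (g : gT)
  : {ffun 'I_k -> gT} := [ffun i => t i ^ g].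

Definition Sigma_i (gT : finGroupType) (G : {group gT}) (s : seq {set gT})
  : {set {set {ffun 'I_(size s) -> gT}}} :=
  [set [set conj_tuple t g | g in G] | t in gen_tuples G s].

Definition l_i (gT : finGroupType) (G : {group gT}) (s : seq {set gT}) : nat :=
  #|Sigma_i G s|.

(* Main.v *)
Require Import Defs.
From mathcomp Require Import all_boot all_fingroup all_solvable.
Set Implicit Arguments. Unset Strict Implicit. Unset Printing Implicit Defensive.
Local Open Scope group_scope.

Section S.
Variables (gT : finGroupType) (G : {group gT}).

Definition orb k (t : {ffun 'I_k -> gT}) := [set conj_tuple t g | g in G].

Lemma conj_tuple1 k (t : {ffun 'I_k -> gT}) : conj_tuple t 1 = t.
Proof. by apply/ffunP=> i; rewrite ffunE conjg1. Qed.

Lemma conj_tupleM k (t : {ffun 'I_k -> gT}) a b :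
  conj_tuple (conj_tuple t a) b = conj_tuple t (a * b).
Proof. by apply/ffunP=> i; rewrite !ffunE conjgM. Qed.

Lemma orb_self k (t : {ffun 'I_k -> gT}) : t \in orb t.
Proof. by apply/imsetP; exists 1; rewrite ?group1 ?conj_tuple1. Qed.

Lemma orb_conj k (t : {ffun 'I_k -> gT}) a : a \in G ->
  orb (conj_tuple t a) = orb t.
Proof.
move=> aG; apply/setP=> x; apply/imsetP/imsetP=> [[g gG ->]|[g gG ->]].
  by exists (a * g); rewrite ?groupM // conj_tupleM.
exists (a^-1 * g); first by rewrite groupM ?groupV.
by rewrite conj_tupleM mulKVg.
Qed.

Lemma gen_fix k (t : {ffun 'I_k -> gT}) h :
  'Z(G) = 1 -> << [set t i | i : 'I_k] >> = G -> h \in G ->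
  (forall i, t i ^ h = t i) -> h = 1.
Proof.
move=> Z1 gen hG hfix.
have : h \in 'Z(G).
  rewrite /center inE hG -gen cent_gen.
  apply/centP=> x /imsetP [i _ ->].
  by apply/commute_sym/commgP; rewrite -conjg_fix hfix.
by rewrite Z1 inE => /eqP.
Qed.

Definition tl k (t : {ffun 'I_k -> gT}) := [seq t i | i <- enum 'I_k].

Lemma size_tl k (t : {ffun 'I_k -> gT}) : size (tl t) = k.
Proof. by rewrite size_map size_enum_ord. Qed.

Lemma nth_tl k (t : {ffun 'I_k -> gT}) (i : 'I_k) : nth 1 (tl t) i = t i.
Proof. by rewrite (nth_map i) ?size_enum_ord // nth_ord_enum. Qed.

Lemma prod_tl k (t : {ffun 'I_k -> gT}) : \prod_(x <- tl t) x = \prod_(i < k) t i.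
Proof.
rewrite (big_nth 1) size_tl big_mkord; apply: eq_bigr => i _.
by rewrite nth_tl.
Qed.


Lemma conj_tupleE k (t : {ffun 'I_k -> gT}) g i : conj_tuple t g i = t i ^ g.
Proof. by rewrite ffunE. Qed.

Lemma classJ C x g : C \in classes G -> x \in C -> g \in G -> x ^ g \in C.
Proof.
case/imsetP=> y yG -> xC gG.
by rewrite -(class_eqP xC); apply: memJ_class.
Qed.

Lemma class_sub C : C \in classes G -> C \subset G.
Proof. by case/imsetP=> y yG ->; apply: class_subG. Qed.

Variables (s1 s2 : seq {set gT}).

Definition catf (t1 : {ffun 'I_(size s1) -> gT}) (t2 : {ffun 'I_(size s2) -> gT})
  : {ffun 'I_(size (s1 ++ s2)) -> gT} := [ffun i : 'I_(size (s1 ++ s2)) => nth 1 (tl t1 ++ tl t2) i].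

Definition Lidx (j : 'I_(size s1)) : 'I_(size (s1 ++ s2)) :=
  cast_ord (esym (size_cat s1 s2)) (lshift (size s2) j).
Definition Ridx (j : 'I_(size s2)) : 'I_(size (s1 ++ s2)) :=
  cast_ord (esym (size_cat s1 s2)) (rshift (size s1) j).

Lemma catL t1 t2 j : catf t1 t2 (Lidx j) = t1 j.
Proof. by rewrite ffunE /= nth_cat size_tl ltn_ord nth_tl. Qed.

Lemma catR t1 t2 j : catf t1 t2 (Ridx j) = t2 j.
Proof.
by rewrite ffunE /= nth_cat size_tl ltnNge leq_addr /= addKn nth_tl.
Qed.

Lemma gen_cat t1 t2 g :
  class_vector G (s1 ++ s2) ->
  t1 \in gen_tuples G s1 -> t2 \in gen_tuples G s2 -> g \in G ->
  catf t1 (conj_tuple t2 g) \in gen_tuples G (s1 ++ s2).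
Proof.
move=> cv; rewrite !inE => /and3P [/forallP m1 /eqP g1 /eqP p1].
move=> /and3P [/forallP m2 /eqP g2 /eqP p2] gG.
have mem : forall i, catf t1 (conj_tuple t2 g) i \in nth set0 (s1 ++ s2) i.
  move=> i; rewrite ffunE !nth_cat size_tl; case: ifP => hi.
    by have E := nth_tl t1 (Ordinal hi); rewrite E; apply: m1.
  have hi2 : i - size s1 < size s2.
    move/negbT: hi; rewrite -leqNgt => hi.
    by rewrite ltn_subLR // -size_cat ltn_ord.
  have E := nth_tl (conj_tuple t2 g) (Ordinal hi2); rewrite E conj_tupleE.
  have iC : nth set0 (s1 ++ s2) i \in s1 ++ s2 by rewrite mem_nth.
  have := classJ (proj1 (cv _ iC)) _ gG.
  by rewrite nth_cat hi; apply; apply: m2.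
apply/and3P; split.
- by apply/forallP.
- rewrite eqEsubset; apply/andP; split.
    rewrite gen_subG; apply/subsetP=> x /imsetP [i _ ->].
    have iC : nth set0 (s1 ++ s2) i \in s1 ++ s2.
      by rewrite mem_nth.
    exact: (subsetP (class_sub (proj1 (cv _ iC)))) _ (mem i).
  rewrite -{1}g1; apply: genS; apply/subsetP=> x /imsetP [j _ ->].
  by apply/imsetP; exists (Lidx j); rewrite ?catL.
- have -> : \prod_(i < size (s1 ++ s2)) catf t1 (conj_tuple t2 g) i
          = \prod_(x <- tl t1 ++ tl (conj_tuple t2 g)) x.
    have hs : size (tl t1 ++ tl (conj_tuple t2 g)) = size (s1 ++ s2).
      by rewrite !size_cat size_tl size_tl.
    rewrite (big_nth 1) hs big_mkord.
    by apply: eq_bigr => i _; rewrite ffunE.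
  rewrite big_cat /= !prod_tl p1 mul1g.
  under eq_bigr do rewrite conj_tupleE.
  rewrite -(big_morph (fun x => x ^ g) (fun x y => conjMg x y g) (conj1g g)).
  by rewrite p2 conj1g.
Qed.

Definition rep (s : seq {set gT}) (O : {set {ffun 'I_(size s) -> gT}}) :=
  odflt [ffun=> 1] [pick t in gen_tuples G s | orb t == O].

Lemma repP (s : seq {set gT}) O : O \in Sigma_i G s ->
  rep O \in gen_tuples G s /\ orb (rep O) = O.
Proof.
move=> OS; rewrite /rep; case: pickP => [t /andP [tg /eqP] //|none].
case/imsetP: OS => t tg EO.
by move: (none t); rewrite tg /= EO eqxx.
Qed.

Definition F (x : {set {ffun 'I_(size s1) -> gT}} * {set {ffun 'I_(size s2) -> gT}} * gT) :=
  orb (catf (rep x.1.1) (conj_tuple (rep x.1.2) x.2)).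

Lemma main : 'Z(G) = 1 -> class_vector G (s1 ++ s2) ->
  #|G| * l_i G s1 * l_i G s2 <= l_i G (s1 ++ s2).
Proof.
move=> Z1 cv; rewrite /l_i (mulnC #|G|) mulnAC -!cardsX.
rewrite -(card_in_imset (f := F)); last first.
  move=> [[O1 O2] g] [[O1' O2'] g']; rewrite !in_setX /=.
  move=> /andP [/andP [h1 h2] hg] /andP [/andP [h1' h2'] hg'] eqF.
  have [r1g r1O] := repP h1; have [r2g r2O] := repP h2.
  have [r1g' r1O'] := repP h1'; have [r2g' r2O'] := repP h2'.
  have : catf (rep O1') (conj_tuple (rep O2') g') \in
         orb (catf (rep O1) (conj_tuple (rep O2) g)).
    by move: eqF; rewrite /F /= => ->; apply: orb_self.
  case/imsetP => h hG Ecat.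
  have E1 : rep O1' = conj_tuple (rep O1) h.
    apply/ffunP => j; move/ffunP/(_ (Lidx j)): Ecat.
    by rewrite conj_tupleE !catL conj_tupleE.
  have EO1 : O1' = O1 by rewrite -r1O' E1 orb_conj.
  subst O1'.
  have h1E : h = 1.
    apply: (gen_fix Z1 _ hG); first by move: r1g; rewrite inE => /and3P [_ /eqP gen _]; exact: gen.
    by move=> j; move/ffunP/(_ j): E1; rewrite /= conj_tupleE => <-.
  subst h; rewrite conj_tuple1 in Ecat.
  have E2 : rep O2' = conj_tuple (rep O2) (g * g'^-1).
    apply/ffunP => j; move/ffunP/(_ (Ridx j)): Ecat.
    rewrite !catR !conj_tupleE conjgM => <-.
    by rewrite conjgK.
  have gg : g * g'^-1 \in G by rewrite groupM ?groupV.
  have EO2 : O2' = O2 by rewrite -r2O' E2 orb_conj.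
  subst O2'.
  have : g * g'^-1 = 1.
    apply: (gen_fix Z1 _ gg); first by move: r2g; rewrite inE => /and3P [_ /eqP gen _]; exact: gen.
    by move=> j; move/ffunP/(_ j): E2; rewrite /= conj_tupleE => <-.
  by move/eqP; rewrite -eq_mulgV1 => /eqP ->.
apply: subset_leq_card; apply/subsetP => y /imsetP [[[O1 O2] g]].
rewrite !in_setX /= => /andP [/andP [h1 h2] hg] ->.
have [r1g _] := repP h1; have [r2g _] := repP h2.
by apply/imsetP; exists (catf (rep O1) (conj_tuple (rep O2) g)); rewrite ?gen_cat.
Qed.

End S.

Theorem proposition12 (gT : finGroupType) (G : {group gT}) (C : seq {set gT}) (n : nat) :
  ('Z(G) = 1)%g ->
  class_vector G C ->
  6 <= size C ->
  3 <= n -> n <= size C - 3 ->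
  #|G| * l_i G (take n C) * l_i G (drop n C) <= l_i G C.
Proof.
move=> Z1 cv _ _ _.
have := @main gT G (take n C) (drop n C) Z1.
by rewrite cat_take_drop; apply.
Qed.
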